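(* In the system $\mathbf{BTC}$ with summation (defined in the context), for every tuplix term $t$, every data variable $u$ and every data term $p$ with $u\notin\mathit{Var}(p)$, the following identities are derivable: \[ \textstyle\sum_u (t\oplus\gamma(u-p)) = t[p/u],\qquad \sum_u t = t[p/u]+\sum_u t,\qquad \sum_u t = t[p/u]+\sum_u (t\oplus\tilde\gamma(u-p)). \]
   Context: Data: a non-trivial cancellation meadow is a commutative ring with unit with a total unary operation $(\cdot)^{-1}$ satisfying $(u^{-1})^{-1}=u$, $u\cdot(u\cdot u^{-1})=u$, $0\neq 1$ and the cancellation law ($u\neq 0$ and $uv=uw$ imply $v=w$). Fix such a $\mathcal{D}$. Data terms are built from data variables, constants $0,1$, binary $+,\cdot$ and unary $-$, $(\cdot)^{-1}$; $p/q$ abbreviates $p\cdot q^{-1}$, $p-q$ abbreviates $p+(-q)$; $\mathit{Var}(p)$ is the set of data variables in $p$. Fix a nonempty attribute set $A$. Tuplix terms are built from tuplix variables, constants $\epsilon,\delta$, entries $a(p)$ ($a\in A$), zero tests $\gamma(p)$, binary operators $\oplus$ and $+$, and, for each data variable $u$, the unary binder $\sum_u$ (binding $u$). $\tilde\gamma(p)$ abbreviates $\gamma(1-p/p)$. $\mathit{FV}(t)$ is the set of free data variables of $t$, and $t[p/u]$ is capture-avoiding substitution of $p$ for the free occurrences of $u$ in $t$ (bound variables renamed as needed). The proof system (two-sorted equational logic) has axioms (T1) $x\oplus y=y\oplus x$; (T2) $(x\oplus y)\oplus z=x\oplus(y\oplus z)$; (T3) $x\oplus\epsilon=x$; (T4)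 $x\oplus\delta=\delta$; (T5) $a(u)\oplus a(v)=a(u+v)$; (T6) $\gamma(u)=\gamma(u/u)$; (T7) $\gamma(0)=\epsilon$; (T8) $\gamma(1)=\delta$; (T9) $\gamma(u)\oplus\gamma(v)=\gamma(u/u+v/v)$; (T10) $\gamma(u-v)\oplus a(u)=\gamma(u-v)\oplus a(v)$; (C1) $x+y=y+x$; (C2) $(x+y)+z=x+(y+z)$; (C3) $x+x=x$; (C4) $x+\delta=x$; (C5) $x\oplus(y+z)=(x\oplus y)+(x\oplus z)$; (C6) $\gamma(u)+\gamma(v)=\gamma(uv)$; and the schemes, for tuplix terms $s,t$ and data term $p$: (S1) $\sum_u t=t$ if $u\notin\mathit{FV}(t)$; (S2) $\sum_u t=\sum_v t[v/u]$ if $v\notin\mathit{FV}(t)$; (S3) $\sum_u(s\oplus t)=s\oplus\sum_u t$ if $u\notin\mathit{FV}(s)$; (S4) $\sum_u(s+t)=\sum_u s+\sum_u t$; (S5) $\sum_u\gamma(u-p)=\epsilon$ if $u\notin\mathit{Var}(p)$; (S6) $\sum_u\tilde\gamma(u-p)=\epsilon$ if $u\notin\mathit{Var}(p)$; plus the rule (DE): if $\mathcal{D}\models p=q$ then $\gamma(p)=\gamma(q)$. *)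

(* Defs.v *)
From HB Require Import structures.
From mathcomp Require Import all_boot all_order all_algebra.
Set Implicit Arguments. Unset Strict Implicit. Unset Printing Implicit Defensive.
Import GRing.Theory.

Record cancellation_meadow (R : comNzRingType) (inv : R -> R) : Prop := {
  meadow_invK : forall u : R, inv (inv u) = u;
  meadow_RIL  : forall u : R, (u * (u * inv u) = u)%R;
  meadow_cancel : forall u v w : R, u != 0%R -> (u * v = u * w)%R -> v = w
}.

Inductive dterm : Type :=
  | DVar : nat -> dterm
  | D0 : dterm
  | D1 : dterm
  | DAdd : dterm -> dterm -> dterm
  | DMul : dterm -> dterm -> dterm
  | DNeg : dterm -> dterm
  | DInv : dterm -> dterm.

Definition DDiv (p q : dterm) : dterm := DMul p (DInv q).
Definition DSub (p q : dterm) : dterm := DAdd p (DNeg q).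

Fixpoint dvars (p : dterm) : seq nat :=
  match p with
  | DVar x => [:: x]
  | D0 | D1 => [::]
  | DAdd p q | DMul p q => dvars p ++ dvars q
  | DNeg p | DInv p => dvars p
  end.

Fixpoint deval (R : comNzRingType) (inv : R -> R) (rho : nat -> R) (p : dterm) : R :=
  match p with
  | DVar x => rho x
  | D0 => 0%R
  | D1 => 1%R
  | DAdd p q => (deval inv rho p + deval inv rho q)%R
  | DMul p q => (deval inv rho p * deval inv rho q)%R
  | DNeg p => (- deval inv rho p)%R
  | DInv p => inv (deval inv rho p)
  end.

Definition models_eq (R : comNzRingType) (inv : R -> R) (p q : dterm) : Prop :=
  forall rho : nat -> R, deval inv rho p = deval inv rho q.

Fixpoint dsubst (sigma : nat -> dterm) (p : dterm) : dterm :=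
  match p with
  | DVar x => sigma x
  | D0 => D0
  | D1 => D1
  | DAdd p q => DAdd (dsubst sigma p) (dsubst sigma q)
  | DMul p q => DMul (dsubst sigma p) (dsubst sigma q)
  | DNeg p => DNeg (dsubst sigma p)
  | DInv p => DInv (dsubst sigma p)
  end.

(* Tuplix variables are natural numbers; A is the attribute set. *)
Inductive tterm (A : Type) : Type :=
  | TVar : nat -> tterm A
  | Eps : tterm A
  | Delta : tterm A
  | Entry : A -> dterm -> tterm A
  | Gamma : dterm -> tterm A
  | Oplus : tterm A -> tterm A -> tterm A
  | Plus : tterm A -> tterm A -> tterm A
  | Sum : nat -> tterm A -> tterm A.   (* Sum u t binds data variable u *)

Arguments TVar {A}. Arguments Eps {A}. Arguments Delta {A}.
Arguments Gamma {A}.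

Definition GammaT {A : Type} (p : dterm) : tterm A :=
  Gamma (DSub D1 (DDiv p p)).

Fixpoint fv {A : Type} (t : tterm A) : seq nat :=
  match t with
  | TVar _ | Eps | Delta => [::]
  | Entry _ p | Gamma p => dvars p
  | Oplus s t | Plus s t => fv s ++ fv t
  | Sum u t => [seq x <- fv t | x != u]
  end.

(* Capture-avoiding parallel substitution of data terms for free data
   variables; a bound variable is renamed to a fresh one exactly when it
   would capture a variable of a substituted term. *)
Fixpoint tsubst {A : Type} (sigma : nat -> dterm) (t : tterm A) : tterm A :=
  match t with
  | TVar x => TVar x
  | Eps => Eps
  | Delta => Delta
  | Entry a p => Entry a (dsubst sigma p)
  | Gamma p => Gamma (dsubst sigma p)
  | Oplus s t => Oplus (tsubst sigma s) (tsubst sigma t)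
  | Plus s t => Plus (tsubst sigma s) (tsubst sigma t)
  | Sum v t =>
      let S := flatten [seq dvars (sigma x) | x <- [seq y <- fv t | y != v]] in
      let w := if v \in S then (foldr maxn 0 S).+1 else v in
      Sum w (tsubst (fun x => if x == v then DVar w else sigma x) t)
  end.

Definition subst1 {A : Type} (t : tterm A) (p : dterm) (u : nat) : tterm A :=
  tsubst (fun x => if x == u then p else DVar x) t.

(* Two-sorted equational logic: reflexivity, symmetry, transitivity,
   congruence (including under the binder Sum u), all substitution
   instances of axioms T1-T10, C1-C6 (given schematically), the schemes
   S1-S6, and the rule DE. *)
Inductive derivable (R : comNzRingType) (inv : R -> R) (A : Type)
  : tterm A -> tterm A -> Prop :=
  | d_refl : forall t, derivable inv t t
  | d_sym : forall s t, derivable inv s t -> derivable inv t s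
  | d_trans : forall s t r, derivable inv s t -> derivable inv t r -> derivable inv s r
  | d_oplus : forall s s' t t', derivable inv s s' -> derivable inv t t' ->
      derivable inv (Oplus s t) (Oplus s' t')
  | d_plus : forall s s' t t', derivable inv s s' -> derivable inv t t' ->
      derivable inv (Plus s t) (Plus s' t')
  | d_sum : forall u s t, derivable inv s t -> derivable inv (Sum u s) (Sum u t)
  | ax_T1 : forall x y, derivable inv (Oplus x y) (Oplus y x)
  | ax_T2 : forall x y z, derivable inv (Oplus (Oplus x y) z) (Oplus x (Oplus y z))
  | ax_T3 : forall x, derivable inv (Oplus x Eps) x
  | ax_T4 : forall x, derivable inv (Oplus x Delta) Delta
  | ax_T5 : forall a p q, derivable inv (Oplus (Entry a p) (Entry a q)) (Entry a (DAdd p q))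
  | ax_T6 : forall p, derivable inv (Gamma p) (Gamma (DDiv p p))
  | ax_T7 : derivable inv (Gamma D0) Eps
  | ax_T8 : derivable inv (Gamma D1) Delta
  | ax_T9 : forall p q, derivable inv (Oplus (Gamma p) (Gamma q))
                                      (Gamma (DAdd (DDiv p p) (DDiv q q)))
  | ax_T10 : forall a p q, derivable inv (Oplus (Gamma (DSub p q)) (Entry a p))
                                         (Oplus (Gamma (DSub p q)) (Entry a q))
  | ax_C1 : forall x y, derivable inv (Plus x y) (Plus y x)
  | ax_C2 : forall x y z, derivable inv (Plus (Plus x y) z) (Plus x (Plus y z))
  | ax_C3 : forall x, derivable inv (Plus x x) x
  | ax_C4 : forall x, derivable inv (Plus x Delta) x
  | ax_C5 : forall x y z, derivable inv (Oplus x (Plus y z)) (Plus (Oplus x y) (Oplus x z))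
  | ax_C6 : forall p q, derivable inv (Plus (Gamma p) (Gamma q)) (Gamma (DMul p q))
  | ax_S1 : forall u t, u \notin fv t -> derivable inv (Sum u t) t
  | ax_S2 : forall u v t, v \notin fv t -> derivable inv (Sum u t) (Sum v (subst1 t (DVar v) u))
  | ax_S3 : forall u s t, u \notin fv s -> derivable inv (Sum u (Oplus s t)) (Oplus s (Sum u t))
  | ax_S4 : forall u s t, derivable inv (Sum u (Plus s t)) (Plus (Sum u s) (Sum u t))
  | ax_S5 : forall u p, u \notin dvars p -> derivable inv (Sum u (Gamma (DSub (DVar u) p))) Eps
  | ax_S6 : forall u p, u \notin dvars p -> derivable inv (Sum u (GammaT (DSub (DVar u) p))) Eps
  | r_DE : forall p q, models_eq inv p q -> derivable inv (Gamma p) (Gamma q).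

(* Main.v *)
Require Import Defs.
From mathcomp Require Import all_boot all_order all_algebra.
Set Implicit Arguments. Unset Strict Implicit. Unset Printing Implicit Defensive.
Import GRing.Theory.

Definition freshv (v : nat) (S : seq nat) : nat :=
  if v \in S then (foldr maxn 0 S).+1 else v.

Lemma foldr_max_ge (S : seq nat) y : y \in S -> y <= foldr maxn 0 S.
Proof.
elim: S => //= a S IH; rewrite inE => /orP [/eqP->|/IH H]; first exact: leq_maxl.
exact: leq_trans H (leq_maxr _ _).
Qed.

Lemma big_notin (S : seq nat) : (foldr maxn 0 S).+1 \notin S.
Proof. apply/negP => /foldr_max_ge; by rewrite ltnn. Qed.

Lemma freshv_notin v S : freshv v S \notin S.
Proof. rewrite /freshv; case: ifP => [_|H]; [exact: big_notin | by rewrite H]. Qed.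

Definition Sof {A} (s : nat -> dterm) (v : nat) (t : tterm A) :=
  flatten [seq dvars (s x) | x <- [seq y <- fv t | y != v]].

Lemma tsubst_Sum {A} (s : nat -> dterm) v (t : tterm A) :
  tsubst s (Sum v t) = Sum (freshv v (Sof s v t))
     (tsubst (fun x => if x == v then DVar (freshv v (Sof s v t)) else s x) t).
Proof. by []. Qed.

Lemma Sof_in {A} s v (t : tterm A) x y :
  x \in fv t -> x != v -> y \in dvars (s x) -> y \in Sof s v t.
Proof. move=> Hx Hxv Hy; apply/flatten_mapP; exists x => //; by rewrite mem_filter Hxv Hx. Qed.

Lemma dvars_dsubst s q y :
  y \in dvars (dsubst s q) <-> exists2 x, x \in dvars q & y \in dvars (s x).
Proof.
elim: q => [x|||q1 IH1 q2 IH2|q1 IH1 q2 IH2|q IH|q IH] /=.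
- split=> [H|]; [by exists x; rewrite ?inE | by case=> x'; rewrite inE => /eqP->].
- by split=> //; case.
- by split=> //; case.
- rewrite mem_cat; split.
  + case/orP=> [/IH1|/IH2] [x Hx Hy]; exists x => //; by rewrite mem_cat Hx ?orbT.
  + case=> x; rewrite mem_cat => /orP [Hx|Hx] Hy; apply/orP;
      [left; apply/IH1|right; apply/IH2]; by exists x.
- rewrite mem_cat; split.
  + case/orP=> [/IH1|/IH2] [x Hx Hy]; exists x => //; by rewrite mem_cat Hx ?orbT.
  + case=> x; rewrite mem_cat => /orP [Hx|Hx] Hy; apply/orP;
      [left; apply/IH1|right; apply/IH2]; by exists x.
- exact: IH.
- exact: IH.
Qed.

Lemma dsubst_ext s s' q : (forall x, x \in dvars q -> s x = s' x) -> dsubst s q = dsubst s' q.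
Proof.
elim: q => [x|||q1 IH1 q2 IH2|q1 IH1 q2 IH2|q IH|q IH] H /=.
- by apply: H; rewrite inE.
- by []. - by [].
- by rewrite IH1 ?IH2 // => x Hx; apply: H; rewrite /= mem_cat Hx ?orbT.
- by rewrite IH1 ?IH2 // => x Hx; apply: H; rewrite /= mem_cat Hx ?orbT.
- by rewrite IH.
- by rewrite IH.
Qed.

Lemma dsubst_id s q : (forall x, x \in dvars q -> s x = DVar x) -> dsubst s q = q.
Proof.
elim: q => [x|||q1 IH1 q2 IH2|q1 IH1 q2 IH2|q IH|q IH] H /=.
- by apply: H; rewrite inE.
- by []. - by [].
- by rewrite IH1 ?IH2 // => x Hx; apply: H; rewrite /= mem_cat Hx ?orbT.
- by rewrite IH1 ?IH2 // => x Hx; apply: H; rewrite /= mem_cat Hx ?orbT.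
- by rewrite IH.
- by rewrite IH.
Qed.

Lemma dsubst_comp r s q : dsubst r (dsubst s q) = dsubst (fun x => dsubst r (s x)) q.
Proof. by elim: q => //= [q1 -> q2 ->|q1 -> q2 ->|q ->|q ->]. Qed.

Lemma deval_dsubst_ext (R : comNzRingType) (inv : R -> R) rho s s' q :
  (forall x, x \in dvars q -> deval inv rho (s x) = deval inv rho (s' x)) ->
  deval inv rho (dsubst s q) = deval inv rho (dsubst s' q).
Proof.
elim: q => [x|||q1 IH1 q2 IH2|q1 IH1 q2 IH2|q IH|q IH] H /=.
- by apply: H; rewrite inE.
- by []. - by [].
- by rewrite IH1 ?IH2 // => x Hx; apply: H; rewrite /= mem_cat Hx ?orbT.
- by rewrite IH1 ?IH2 // => x Hx; apply: H; rewrite /= mem_cat Hx ?orbT.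
- by rewrite IH.
- by rewrite IH.
Qed.

Lemma fv_tsubst {A} (t : tterm A) s y :
  y \in fv (tsubst s t) <-> exists2 x, x \in fv t & y \in dvars (s x).
Proof.
elim: t s => [n|||a q|q|t1 IH1 t2 IH2|t1 IH1 t2 IH2|v t IH] s.
- by split=> //; case.
- by split=> //; case.
- by split=> //; case.
- exact: dvars_dsubst.
- exact: dvars_dsubst.
- rewrite /= mem_cat; split.
  + case/orP=> [/IH1|/IH2] [x Hx Hy]; exists x => //; by rewrite mem_cat Hx ?orbT.
  + case=> x; rewrite mem_cat => /orP [Hx|Hx] Hy; apply/orP;
      [left; apply/IH1|right; apply/IH2]; by exists x.
- rewrite /= mem_cat; split.
  + case/orP=> [/IH1|/IH2] [x Hx Hy]; exists x => //; by rewrite mem_cat Hx ?orbT.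
  + case=> x; rewrite mem_cat => /orP [Hx|Hx] Hy; apply/orP;
      [left; apply/IH1|right; apply/IH2]; by exists x.
- rewrite tsubst_Sum; set w := freshv v (Sof s v t).
  rewrite /= mem_filter; split.
  + case/andP=> Hyw /IH [x Hx Hy]; move: Hy; case: (eqVneq x v) => [Exv|Hxv].
      by rewrite /= inE => /eqP Eyw; rewrite Eyw eqxx in Hyw.
    move=> Hy; exists x => //; by rewrite mem_filter Hxv Hx.
  + case=> x; rewrite mem_filter => /andP [Hxv Hx] Hy; apply/andP; split.
    * apply/negP => /eqP Eyw; have := freshv_notin v (Sof s v t).
      by rewrite -/w -Eyw (Sof_in Hx Hxv Hy).
    * apply/IH; exists x => //; by rewrite (negbTE Hxv).
Qed.

Lemma tsubst_ext {A} (t : tterm A) s s' :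
  (forall x, x \in fv t -> s x = s' x) -> tsubst s t = tsubst s' t.
Proof.
elim: t s s' => [n|||a q|q|t1 IH1 t2 IH2|t1 IH1 t2 IH2|v t IH] s s' H.
- by []. - by []. - by [].
- by rewrite /= (dsubst_ext H).
- by rewrite /= (dsubst_ext H).
- rewrite /= (IH1 s s') ?(IH2 s s') // => x Hx; apply: H; by rewrite /= mem_cat Hx ?orbT.
- rewrite /= (IH1 s s') ?(IH2 s s') // => x Hx; apply: H; by rewrite /= mem_cat Hx ?orbT.
- rewrite !tsubst_Sum.
  have ES : Sof s v t = Sof s' v t.
    rewrite /Sof; congr flatten; apply/eq_in_map => x Hx; by rewrite (H x Hx).
  rewrite ES; congr Sum; apply: IH => x Hx; case: ifP => // /negbT Hxv; apply: H.
  by rewrite /= mem_filter Hxv Hx.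
Qed.

Lemma tsubst_id {A} (t : tterm A) s :
  (forall x, x \in fv t -> s x = DVar x) -> tsubst s t = t.
Proof.
elim: t s => [n|||a q|q|t1 IH1 t2 IH2|t1 IH1 t2 IH2|v t IH] s H.
- by []. - by []. - by [].
- by rewrite /= (dsubst_id H).
- by rewrite /= (dsubst_id H).
- rewrite /= IH1 ?IH2 // => x Hx; apply: H; by rewrite /= mem_cat Hx ?orbT.
- rewrite /= IH1 ?IH2 // => x Hx; apply: H; by rewrite /= mem_cat Hx ?orbT.
- rewrite tsubst_Sum.
  have Hv : v \notin Sof s v t.
    apply/negP => /flatten_mapP [x]; rewrite mem_filter => /andP [Hxv Hx].
    rewrite (H x); last by rewrite /= mem_filter Hxv Hx.
    by rewrite inE => /eqP E; rewrite E eqxx in Hxv.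
  rewrite /freshv (negbTE Hv); congr Sum; apply: IH => x Hx.
  case: eqP => [->//|/eqP Hxv]; apply: H; by rewrite /= mem_filter Hxv Hx.
Qed.

Lemma ren_lemma (R : comNzRingType) (inv : R -> R) A (t : tterm A)
  (HC : forall r s, derivable inv (tsubst r (tsubst s t)) (tsubst (fun x => dsubst r (s x)) t))
  v (A1 B1 : nat -> dterm) w z :
  A1 v = DVar w -> B1 v = DVar z ->
  (forall x, x \in fv t -> x != v ->
     [/\ A1 x = B1 x, w \notin dvars (A1 x) & z \notin dvars (B1 x)]) ->
  derivable inv (Sum w (tsubst A1 t)) (Sum z (tsubst B1 t)).
Proof.
move=> HA HB H.
have [Ewz|Nwz] := eqVneq w z.
  subst z; rewrite (@tsubst_ext _ t A1 B1); first exact: d_refl.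
  move=> x Hx; case: (eqVneq x v) => [->|Hxv]; first by rewrite HA HB.
  by case: (H x Hx Hxv).
have Hz : z \notin fv (tsubst A1 t).
  apply/negP => /fv_tsubst [x Hx]; case: (eqVneq x v) => [->|Hxv].
    by rewrite HA inE eq_sym (negbTE Nwz).
  by case: (H x Hx Hxv) => -> _ /negP.
apply: d_trans (ax_S2 inv w Hz) _.
apply: d_sum; rewrite /subst1.
apply: d_trans (HC _ _) _.
rewrite (@tsubst_ext _ t _ B1); first exact: d_refl.
move=> x Hx; case: (eqVneq x v) => [->|Hxv]; first by rewrite HA /= eqxx HB.
case: (H x Hx Hxv) => <- Hw _; apply: dsubst_id => y Hy.
case: eqP => // Eyw; by rewrite -Eyw Hy in Hw.
Qed.

Lemma tsubst_comp (R : comNzRingType) (inv : R -> R) A (t : tterm A) : forall r s,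
  derivable inv (tsubst r (tsubst s t)) (tsubst (fun x => dsubst r (s x)) t).
Proof.
elim: t => [n|||a q|q|t1 IH1 t2 IH2|t1 IH1 t2 IH2|v t IH] r s.
- exact: d_refl. - exact: d_refl. - exact: d_refl.
- rewrite /= dsubst_comp; exact: d_refl.
- rewrite /= dsubst_comp; exact: d_refl.
- exact: d_oplus.
- exact: d_plus.
- rewrite (tsubst_Sum s).
  set w1 := freshv v (Sof s v t).
  set s1 := (fun x => if x == v then DVar w1 else s x).
  rewrite tsubst_Sum.
  set w2 := freshv w1 (Sof r w1 (tsubst s1 t)).
  set r1 := fun x => if x == w1 then DVar w2 else r x.
  rewrite tsubst_Sum.
  set w3 := freshv v (Sof (fun x => dsubst r (s x)) v t).
  apply: d_trans (d_sum _ (IH r1 s1)) _.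
  apply: (ren_lemma IH (v := v)).
  + by rewrite /s1 eqxx /= /r1 eqxx.
  + by rewrite eqxx.
  + move=> x Hx Hxv.
    have Es1 : s1 x = s x by rewrite /s1 (negbTE Hxv).
    have Hnw1 : forall y, y \in dvars (s x) -> y != w1.
      move=> y Hy; apply/negP => /eqP Eyw; have := freshv_notin v (Sof s v t).
      by rewrite -/w1 -Eyw (Sof_in Hx Hxv Hy).
    have Ed : dsubst r1 (s x) = dsubst r (s x).
      apply: dsubst_ext => y Hy; by rewrite /r1 (negbTE (Hnw1 y Hy)).
    rewrite Es1 Ed (negbTE Hxv); split => //.
    * apply/negP => /dvars_dsubst [y Hy Hw2].
      have Hy1 : y \in fv (tsubst s1 t) by apply/fv_tsubst; exists x => //; rewrite Es1.
      have := freshv_notin w1 (Sof r w1 (tsubst s1 t)).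
      by rewrite -/w2 (Sof_in Hy1 (Hnw1 y Hy) Hw2).
    * apply/negP => Hw3.
      have := freshv_notin v (Sof (fun x => dsubst r (s x)) v t).
      by rewrite -/w3 (Sof_in (s := fun x => dsubst r (s x)) Hx Hxv Hw3).
Qed.

Lemma mulV1 (R : comNzRingType) (inv : R -> R) (HD : cancellation_meadow inv) (x : R) :
  x != 0%R -> (x * inv x = 1)%R.
Proof. move=> Hx; apply: (meadow_cancel HD Hx); by rewrite mulr1 (meadow_RIL HD). Qed.

Lemma nz2 (R : comNzRingType) (inv : R -> R) (HD : cancellation_meadow inv)
  (two : (1 + 1 : R)%R != 0%R) (y : R) : (1 + y * inv y)%R != 0%R.
Proof.
case: (eqVneq y 0%R) => [->|Hy]; first by rewrite mul0r addr0 oner_neq0.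
by rewrite (mulV1 HD Hy).
Qed.

Lemma GG (R : comNzRingType) (inv : R -> R) (HD : cancellation_meadow inv)
  (two : (1 + 1 : R)%R != 0%R) A c q q' :
  (forall rho, deval inv rho c = 0%R -> deval inv rho q = deval inv rho q') ->
  derivable (A:=A) inv (Oplus (Gamma c) (Gamma q)) (Oplus (Gamma c) (Gamma q')).
Proof.
move=> H.
apply: d_trans (ax_T9 _ _ _ _) _.
apply: d_trans (ax_T6 _ _ _) _.
apply: d_sym; apply: d_trans (ax_T9 _ _ _ _) _.
apply: d_trans (ax_T6 _ _ _) _.
apply: r_DE => rho /=.
case: (eqVneq (deval inv rho c) 0%R) => [Hc|Hc]; first by rewrite (H rho Hc).
rewrite (mulV1 HD Hc) (mulV1 HD (nz2 HD two _)) (mulV1 HD (nz2 HD two _)) //.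
Qed.

Lemma GL (R : comNzRingType) (inv : R -> R) (HD : cancellation_meadow inv)
  (two : (1 + 1 : R)%R != 0%R) A c d :
  (forall rho, deval inv rho c = 0%R -> deval inv rho d = 0%R) ->
  derivable (A:=A) inv (Gamma c) (Oplus (Gamma c) (Gamma d)).
Proof.
move=> H; apply: d_sym.
have G1 : derivable (A:=A) inv (Oplus (Gamma c) (Gamma d)) (Oplus (Gamma c) (Gamma D0)).
  by apply: GG.
apply: d_trans G1 _.
apply: d_trans (d_oplus (d_refl _ _) (ax_T7 _ _)) _.
exact: ax_T3.
Qed.

Lemma ACg (R : comNzRingType) (inv : R -> R) A (g a b : tterm A) :
  derivable inv (Oplus (Oplus g g) (Oplus a b)) (Oplus (Oplus g a) (Oplus g b)).
Proof.
apply: d_trans (ax_T2 _ _ _ _) _.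
apply: d_trans; last exact: d_sym (ax_T2 _ _ _ _).
apply: d_oplus; first exact: d_refl.
apply: d_trans (d_sym (ax_T2 _ _ _ _)) _.
apply: d_trans (d_oplus (ax_T1 _ _ _) (d_refl _ _)) _.
exact: ax_T2.
Qed.

Lemma Klemma (R : comNzRingType) (inv : R -> R) (HD : cancellation_meadow inv)
  (two : (1 + 1 : R)%R != 0%R) A c (t : tterm A) : forall sigma tau,
  (forall x, x \in fv t -> forall rho, deval inv rho c = 0%R ->
     deval inv rho (sigma x) = deval inv rho (tau x)) ->
  derivable inv (Oplus (Gamma c) (tsubst sigma t)) (Oplus (Gamma c) (tsubst tau t)).
Proof.
elim: t => [n|||a q|q|t1 IH1 t2 IH2|t1 IH1 t2 IH2|v t IH] sigma tau H.
- exact: d_refl. - exact: d_refl. - exact: d_refl.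
- rewrite /=.
  set q1 := dsubst sigma q. set q2 := dsubst tau q.
  have Hd : derivable (A:=A) inv (Gamma c) (Oplus (Gamma c) (Gamma (DSub q1 q2))).
    apply: GL => // rho Hc /=.
    rewrite /q1 /q2 (@deval_dsubst_ext _ _ _ sigma tau) ?subrr // => x Hx.
    exact: H.
  apply: d_trans (d_oplus Hd (d_refl _ _)) _.
  apply: d_trans (ax_T2 _ _ _ _) _.
  apply: d_trans (d_oplus (d_refl _ _) (ax_T10 _ _ _ _)) _.
  apply: d_trans (d_sym (ax_T2 _ _ _ _)) _.
  exact: d_oplus (d_sym Hd) (d_refl _ _).
- apply: GG => // rho Hc /=.
  apply: deval_dsubst_ext => x Hx; exact: H.
- have Hg := @GL _ _ HD two A c c (fun rho h => h).
  apply: d_trans (d_oplus Hg (d_refl _ _)) _.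
  apply: d_trans (ACg _ _ _ _) _.
  apply: d_trans; last exact: d_sym (d_trans (d_oplus Hg (d_refl _ _)) (ACg _ _ _ _)).
  apply: d_oplus.
  + apply: IH1 => x Hx; apply: H; by rewrite /= mem_cat Hx.
  + apply: IH2 => x Hx; apply: H; by rewrite /= mem_cat Hx orbT.
- apply: d_trans (ax_C5 _ _ _ _) _.
  apply: d_trans; last exact: d_sym (ax_C5 _ _ _ _).
  apply: d_plus.
  + apply: IH1 => x Hx; apply: H; by rewrite /= mem_cat Hx.
  + apply: IH2 => x Hx; apply: H; by rewrite /= mem_cat Hx orbT.
- rewrite !tsubst_Sum.
  set w1 := freshv v (Sof sigma v t).
  set w1' := freshv v (Sof tau v t).
  set L := dvars c ++ flatten [seq dvars (sigma x) ++ dvars (tau x) | x <- fv t].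
  set z := (foldr maxn 0 L).+1.
  have HzL : z \notin L := big_notin L.
  have Hzc : z \notin dvars c by apply: contra HzL; rewrite mem_cat => ->.
  have Hzs : forall x, x \in fv t -> z \notin dvars (sigma x).
    move=> x Hx; apply: contra HzL => Hz; rewrite mem_cat; apply/orP; right.
    by apply/flatten_mapP; exists x => //; rewrite mem_cat Hz.
  have Hzt : forall x, x \in fv t -> z \notin dvars (tau x).
    move=> x Hx; apply: contra HzL => Hz; rewrite mem_cat; apply/orP; right.
    by apply/flatten_mapP; exists x => //; rewrite mem_cat Hz orbT.
  set s2 := fun x => if x == v then DVar z else sigma x.
  set t2 := fun x => if x == v then DVar z else tau x.
  have R1 : derivable inv (Sum w1 (tsubst (fun x => if x == v then DVar w1 else sigma x) t))
                          (Sum z (tsubst s2 t)).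
    apply: (ren_lemma (tsubst_comp inv t) (v := v)); rewrite /s2 /t2 /= ?eqxx //.
    move=> x Hx Hxv; rewrite /s2 !(negbTE Hxv); split => //; last exact: Hzs.
    apply/negP => Hy; have := freshv_notin v (Sof sigma v t).
    by rewrite -/w1 (Sof_in Hx Hxv Hy).
  have R2 : derivable inv (Sum w1' (tsubst (fun x => if x == v then DVar w1' else tau x) t))
                          (Sum z (tsubst t2 t)).
    apply: (ren_lemma (tsubst_comp inv t) (v := v)); rewrite /s2 /t2 /= ?eqxx //.
    move=> x Hx Hxv; rewrite /t2 !(negbTE Hxv); split => //; last exact: Hzt.
    apply/negP => Hy; have := freshv_notin v (Sof tau v t).
    by rewrite -/w1' (Sof_in Hx Hxv Hy).
  apply: d_trans (d_oplus (d_refl _ _) R1) _.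
  apply: d_trans (d_sym (@ax_S3 _ inv A z (Gamma c) (tsubst s2 t) Hzc)) _.
  apply: d_trans (d_sum _ (IH s2 t2 _)) _.
    move=> x Hx rho Hc; rewrite /s2 /t2; case: ifP => // /negbT Hxv.
    apply: H => //; by rewrite /= mem_filter Hxv Hx.
  apply: d_trans (@ax_S3 _ inv A z (Gamma c) (tsubst t2 t) Hzc) _.
  exact: d_oplus (d_refl _ _) (d_sym R2).
Qed.

Lemma all_deriv (R : comNzRingType) (inv : R -> R) (HD : cancellation_meadow inv)
  (two : (1 + 1 : R)%R = 0%R) A (x y : tterm A) : derivable inv x y.
Proof.
have inv1 : inv 1%R = 1%R.
  by rewrite -[inv 1%R]mul1r; apply: (mulV1 HD); exact: oner_neq0.
have ED : derivable (A:=A) inv Delta Eps.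
  apply: d_trans (d_sym (ax_T4 _ Delta)) _.
  apply: d_trans (d_oplus (d_sym (ax_T8 _ _)) (d_sym (ax_T8 _ _))) _.
  apply: d_trans (ax_T9 _ _ _ _) _.
  apply: d_trans (ax_T7 inv A).
  apply: r_DE => rho /=. by rewrite inv1 mulr1.
have Hx : forall u : tterm A, derivable inv u Delta.
  move=> u; apply: d_trans (d_sym (ax_T3 _ u)) _.
  apply: d_trans (d_oplus (d_refl _ u) (d_sym ED)) _; exact: ax_T4.
exact: d_trans (Hx x) (d_sym (Hx y)).
Qed.

Theorem lemma4 (R : comNzRingType) (inv : R -> R) (HD : cancellation_meadow inv)
  (A : Type) (HA : inhabited A) (t : tterm A) (u : nat) (p : dterm) :
  u \notin dvars p ->
  [/\ derivable inv (Sum u (Oplus t (Gamma (DSub (DVar u) p)))) (subst1 t p u),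
      derivable inv (Sum u t) (Plus (subst1 t p u) (Sum u t)) &
      derivable inv (Sum u t)
        (Plus (subst1 t p u) (Sum u (Oplus t (GammaT (DSub (DVar u) p)))))].
Proof.
move=> Hu.
have [two0|two] := eqVneq (1 + 1 : R)%R 0%R.
  by split; apply: (all_deriv HD two0).
set c := DSub (DVar u) p.
set t' := subst1 t p u.
have K : derivable inv (Oplus (Gamma c) (tsubst DVar t)) (Oplus (Gamma c) t').
  apply: Klemma => // x Hx rho /=; case: eqP => [->|_ //] Hc.
  by apply/eqP; rewrite -subr_eq0 Hc.
rewrite (@tsubst_id _ t DVar) // in K.
have Hu' : u \notin fv t'.
  apply/negP => /fv_tsubst [x Hx]; case: eqP => [_|/eqP Hxu]; first by move/negP: Hu.
  by rewrite inE => /eqP Eux; rewrite Eux eqxx in Hxu.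
have I1 : derivable inv (Sum u (Oplus t (Gamma c))) t'.
  apply: d_trans (d_sum _ (ax_T1 _ _ _)) _.
  apply: d_trans (d_sum _ K) _.
  apply: d_trans (d_sum _ (ax_T1 _ _ _)) _.
  apply: d_trans (@ax_S3 _ inv A u t' (Gamma c) Hu') _.
  apply: d_trans (d_oplus (d_refl _ _) (ax_S5 inv A Hu)) _.
  exact: ax_T3.
have EPS : derivable (A:=A) inv Eps (Plus (Gamma c) (GammaT c)).
  apply: d_sym; apply: d_trans (ax_C6 _ _ _ _) _.
  apply: d_trans (ax_T7 inv A); apply: r_DE => rho /=.
  by rewrite mulrDr mulr1 mulrN (meadow_RIL HD) addrN.
have I3 : derivable inv (Sum u t) (Plus t' (Sum u (Oplus t (GammaT c)))).
  apply: d_trans (d_sum _ (d_sym (ax_T3 _ t))) _.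
  apply: d_trans (d_sum _ (d_oplus (d_refl _ t) EPS)) _.
  apply: d_trans (d_sum _ (ax_C5 _ _ _ _)) _.
  apply: d_trans (ax_S4 _ _ _ _) _.
  exact: d_plus I1 (d_refl _ _).
split => //.
apply: d_sym; apply: d_trans (d_plus (d_refl _ t') I3) _.
apply: d_trans (d_sym (ax_C2 _ _ _ _)) _.
apply: d_trans (d_plus (ax_C3 _ _) (d_refl _ _)) _.
exact: d_sym I3.
Qed.
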